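(* Let $D>1$ be a square-free integer with $-D\equiv 2$ or $3\pmod 4$, and suppose $C(-4D)\cong(\mathbb{Z}/2\mathbb{Z})^n$ for some $n\ge 0$. Let $c=p_1^{n_1}\cdots p_k^{n_k}$ with distinct primes $p_i$ and $n_i\ge1$. Then there is a normalized solution to $x^2+Dy^2=z^2$ of the form $(a,b,c)$ if and only if all $p_i\in S$. Further, if all $p_i\in S$, there are exactly $2^{k-1}$ normalized solutions of the form $(a,b,c)$.
   Context: $S:=\{\text{odd primes } q : \left(\frac{-D}{q}\right)=1\}$, with $\left(\frac{\cdot}{q}\right)$ the Legendre symbol. A normalized solution of $x^2+Dy^2=z^2$ is a triple $(a,b,c)$ of natural numbers with $a^2+Db^2=c^2$ and $\gcd(a,b,c)=1$. $C(-4D)$ is the form class group of discriminant $-4D$ (classes of primitive positive-definite binary quadratic forms of discriminant $-4D$ under $\mathrm{SL}_2(\mathbb{Z})$-equivalence, with Dirichlet composition). *)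

(* Defs.v *)
From mathcomp Require Import all_boot all_order all_algebra.
Set Implicit Arguments. Unset Strict Implicit. Unset Printing Implicit Defensive.
Import Order.TTheory GRing.Theory Num.Theory.
Local Open Scope ring_scope.

Definition legendre (a : int) (q : nat) : int :=
  if (q%:Z %| a)%Z then 0
  else if [exists x : 'I_q, (q%:Z %| (x%:Z) ^+ 2 - a)%Z] then 1 else -1.

Definition inS (D : nat) (q : nat) : Prop :=
  [/\ prime q, odd q & legendre (- D%:Z) q = 1].

Definition squarefree (D : nat) : Prop :=
  forall p : nat, prime p -> ~~ (p * p %| D)%N.

Definition normalized (D a b c : nat) : Prop :=
  [/\ (0 < a)%N, (0 < b)%N, (0 < c)%N,
      (a ^ 2 + D * b ^ 2 = c ^ 2)%N & gcdn (gcdn a b) c = 1%N].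

(* (a, b, c) stands for a x^2 + b x y + c y^2 *)
Definition form := (int * int * int)%type.
Definition fa (f : form) : int := f.1.1.
Definition fb (f : form) : int := f.1.2.
Definition fc (f : form) : int := f.2.

Definition disc (f : form) : int := fb f ^+ 2 - 4 * fa f * fc f.

Definition feval (f : form) (x y : int) : int :=
  fa f * x ^+ 2 + fb f * x * y + fc f * y ^+ 2.

Definition prim_pd (D : nat) (f : form) : Prop :=
  [/\ disc f = - (4 * D%:Z), 0 < fa f & gcdz (gcdz (fa f) (fb f)) (fc f) = 1].

(* f(px + qy, rx + sy) *)
Definition form_act (f : form) (p q r s : int) : form :=
  (feval f p r,
   2 * fa f * p * q + fb f * (p * s + q * r) + 2 * fc f * r * s,
   feval f q s).

Definition form_equiv (f g : form) : Prop :=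
  exists p q r s : int, p * s - q * r = 1 /\ g = form_act f p q r s.

Definition principal (D : nat) : form := (1, 0, D%:Z).

Definition dirichlet (f g h : form) : Prop :=
  let a1 := fa f in let b1 := fb f in let a2 := fa g in let b2 := fb g in
  let Dl := disc f in
  exists B : int,
  [/\ disc g = Dl,
      (2 %| b1 + b2)%Z,
      gcdz (gcdz a1 a2) ((b1 + b2) %/ 2)%Z = 1,
      [/\ (2 * a1 %| B - b1)%Z, (2 * a2 %| B - b2)%Z &
           (4 * a1 * a2 %| B ^+ 2 - Dl)%Z] &
      h = (a1 * a2, B, ((B ^+ 2 - Dl) %/ (4 * a1 * a2))%Z)].

(* [f][g] = [h] in the form class group (composition of classes via
   Dirichlet composition of united representatives). *)
Definition class_prod (f g h : form) : Prop :=
  exists f' g' h', [/\ form_equiv f f', form_equiv g g', dirichlet f' g' h'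
                     & form_equiv h' h].

(* C(-4D) is an elementary abelian 2-group, i.e. C(-4D) ~ (Z/2Z)^n for
   some n >= 0 (C(-4D) is finite abelian): every class squares to the
   identity class (that of the principal form). *)
Definition classgroup_elem2 (D : nat) : Prop :=
  forall f h : form, prim_pd D f -> class_prod f f h -> form_equiv h (principal D).

(* Main.v *)
Require Import Defs.
From mathcomp Require Import all_boot all_order all_algebra.
From mathcomp Require Import zify ring lra.
Import Order.TTheory GRing.Theory Num.Theory.
Import Defs.


Definition sqroots (D m : nat) : seq nat := [seq t <- iota 0 m | m %| t ^ 2 + D].

Lemma roots_uniq D m : uniq (sqroots D m).
Proof. by rewrite filter_uniq // iota_uniq. Qed.

Lemma mem_roots D m t : (t \in sqroots D m) = (t < m) && (m %| t ^ 2 + D).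
Proof. by rewrite mem_filter mem_iota add0n andbC. Qed.

Lemma root_mod D m x : (m %| x ^ 2 + D) = (m %| (x %% m) ^ 2 + D).
Proof. by rewrite /dvdn -[in RHS]modnDml [in RHS]modnXm [in RHS]modnDml. Qed.

Lemma root_modd D m d x : d %| m -> (d %| x ^ 2 + D) = (d %| (x %% m) ^ 2 + D).
Proof.
move=> dm; rewrite /dvdn -[in RHS]modnDml -[in RHS]modnXm (modn_dvdm _ dm).
by rewrite [in RHS]modnXm [in RHS]modnDml.
Qed.

Lemma roots_mul D m n : 0 < m -> 0 < n -> coprime m n ->
  size (sqroots D (m * n)) = size (sqroots D m) * size (sqroots D n).
Proof.
move=> m0 n0 co.
have inj : {in sqroots D (m * n) &, injective (fun t => (t %% m, t %% n))}.
  move=> x y; rewrite !mem_roots => /andP[hx _] /andP[hy _] [e1 e2].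
  have : x == y %[mod m * n] by rewrite chinese_remainder // e1 e2 !eqxx.
  by rewrite !modn_small // => /eqP.
rewrite -(size_map (fun t => (t %% m, t %% n))) -(size_allpairs pair).
apply: perm_size; apply: uniq_perm.
- by rewrite map_inj_in_uniq // roots_uniq.
- apply: allpairs_uniq; rewrite ?roots_uniq //.
  by move=> [? ?] [? ?] _ _ [-> ->].
move=> [u v]; apply/mapP/allpairsP.
- move=> [x]; rewrite mem_roots => /andP[hx hd] [-> ->].
  exists (x %% m, x %% n) => /=; split => //; rewrite mem_roots.
  + rewrite ltn_pmod //= -root_mod; apply: dvdn_trans hd; exact: dvdn_mulr.
  + rewrite ltn_pmod //= -root_mod; apply: dvdn_trans hd; exact: dvdn_mull.
- move=> [[u' v'] /=]; rewrite !mem_roots => -[/andP[hu du] /andP[hv dv] [-> ->]].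
  exists (chinese m n u' v' %% (m * n)).
  + rewrite mem_roots ltn_pmod ?muln_gt0 ?m0 //= Gauss_dvd //.
    rewrite -(@root_modd D (m * n) m _ (dvdn_mulr n (dvdnn m))).
    rewrite -(@root_modd D (m * n) n _ (dvdn_mull m (dvdnn n))).
    rewrite (root_mod _ m) chinese_modl // -root_mod du /=.
    by rewrite (root_mod _ n) chinese_modr // -root_mod.
  + have e1 : chinese m n u' v' %% (m * n) %% m = u'.
      by rewrite (modn_dvdm _ (dvdn_mulr n (dvdnn m))) chinese_modl // modn_small.
    have e2 : chinese m n u' v' %% (m * n) %% n = v'.
      by rewrite (modn_dvdm _ (dvdn_mull m (dvdnn n))) chinese_modr // modn_small.
    by rewrite e1 e2.
Qed.
Lemma dvdn_int (m n : nat) : (m %| n) = (m%:Z %| n%:Z)%Z.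
Proof. by rewrite dvdzE. Qed.

Lemma copz p f (x : int) : prime p -> 0 < f -> ~~ (p%:Z %| x)%Z -> coprimez (p ^ f)%:Z x.
Proof.
by move=> pp f0; rewrite dvdzE coprimezE /= coprime_pexpl // prime_coprime.
Qed.

Lemma small_mult (q z x : int) : (0 < q)%R -> (- q < x)%R -> (x < q)%R -> (x = z * q)%R -> x = 0.
Proof. move=> q0 h1 h2 e; have [z0|z0|z0] := ltrgtP z 0; nia. Qed.

Lemma odd_prime_not_dvd2 p t : prime p -> odd p -> p %| 2 * t -> p %| t.
Proof.
move=> pp op; rewrite Euclid_dvdM // => /orP[|//] /(dvdn_leq (isT : 0 < 2)) le2.
have := prime_gt1 pp => gt1.
have p2 : p = 2 by apply/eqP; rewrite eqn_leq le2.
by rewrite p2 in op.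
Qed.

Lemma two_roots (p f D t u : nat) : prime p -> odd p -> ~~ (p %| D) -> 0 < f ->
  t < p ^ f -> u < p ^ f -> 0 < u -> p ^ f %| t ^ 2 + D -> p ^ f %| u ^ 2 + D ->
  t = u \/ t = p ^ f - u.
Proof.
move=> pp op pD f0 tq uq u0 /dvdnP[k1 h1] /dvdnP[k2 h2].
set q := p ^ f in tq uq h1 h2 *.
have q0 : 0 < q by rewrite expn_gt0 prime_gt0.
have hd : ((q%:Z) %| ((t%:Z - u%:Z) * (t%:Z + u%:Z))%R)%Z.
  apply/dvdzP; exists (k1%:Z - k2%:Z)%R.
  have h1' : (t%:Z ^+ 2 + D%:Z = k1%:Z * q%:Z)%R by lia.
  have h2' : (u%:Z ^+ 2 + D%:Z = k2%:Z * q%:Z)%R by lia.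
  lia.
have pt : ~~ (p %| t).
  apply/negP => pt; move: pD; rewrite -(dvdn_addr _ (dvdn_exp (isT : 0 < 2) pt)) h1.
  by rewrite dvdn_mull // /q (dvdn_exp f0 (dvdnn p)).
case: (boolP (p%:Z %| (t%:Z - u%:Z)%R)%Z) => hp.
- have hp2 : ~~ (p%:Z %| (t%:Z + u%:Z)%R)%Z.
    apply: contra pt => hp2.
    have : (p%:Z %| ((t%:Z - u%:Z) + (t%:Z + u%:Z))%R)%Z by rewrite rpredD.
    rewrite (_ : (t%:Z - u%:Z) + (t%:Z + u%:Z) = (2 * t)%:Z)%R; last by lia.
    by rewrite -dvdn_int; apply: odd_prime_not_dvd2.
  move: hd; rewrite Gauss_dvdzl ?copz // => /dvdzP[z hz].
  left; have : (z = 0)%R by clear -hz tq uq q0; have [z0|z0|z0] := ltrgtP z 0; nia.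
  move=> z0; rewrite z0 mul0r in hz; lia.
- move: hd; rewrite mulrC Gauss_dvdzl ?copz // => /dvdzP[z hz].
  right; have : (t%:Z + u%:Z = q%:Z)%R.
    have : (z = 1)%R by clear -hz tq uq q0 u0; have [z0|z0|z0] := ltrgtP z 1; nia.
    by move=> z1; rewrite hz z1 mul1r.
  lia.
Qed.
Lemma hensel D p : prime p -> ~~ (p %| D) -> odd p -> (exists x, p %| x ^ 2 + D) ->
  forall f, exists t, p ^ f.+1 %| t ^ 2 + D.
Proof.
move=> pp pD op [x hx]; elim=> [|f [t ht]]; first by exists x; rewrite expn1.
have pt : ~~ (p %| t).
  apply/negP => pt; move: pD; rewrite -(dvdn_addr _ (dvdn_exp (isT : 0 < 2) pt)).
  suff -> : p %| t ^ 2 + D by [].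
  apply: dvdn_trans ht; exact: (dvdn_exp (isT : 0 < f.+1) (dvdnn p)).
have t0 : 0 < 2 * t by rewrite muln_gt0 /= lt0n; apply: contra pt => /eqP->.
have co : gcdn (2 * t) p = 1.
  apply/eqP; rewrite -/(coprime _ _) coprime_sym prime_coprime //.
  by apply: contra pt; apply: odd_prime_not_dvd2.
case: (egcdnP p t0) => k1 k2 hk _; rewrite co in hk.
case/dvdnP: ht => w hw.
case: p pp pD op hx hw hk pt co => [//|p'] pp pD op hx hw hk pt co.
exists (t + w * k1 * p' * p'.+1 ^ f.+1).
apply/dvdnP; exists (w * (k2 * p' + 1) + (w * k1 * p') ^ 2 * p'.+1 ^ f).
have E : (t + w * k1 * p' * p'.+1 ^ f.+1) ^ 2 + D =
   (t ^ 2 + D) + (k1 * (2 * t)) * (w * p' * p'.+1 ^ f.+1) + (w * k1 * p' * p'.+1 ^ f.+1) ^ 2.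
  ring.
rewrite E hw hk !expnS; ring.
Qed.

Lemma roots_pp D p f : prime p -> odd p -> ~~ (p %| D) -> (exists x, p %| x ^ 2 + D) ->
  0 < f -> size (sqroots D (p ^ f)) = 2.
Proof.
move=> pp op pD ex; case: f => // f _.
have [t0 ht0] := hensel D p pp pD op ex f.
set q := p ^ f.+1 in ht0 *.
have q0 : 0 < q by rewrite expn_gt0 prime_gt0.
have pq : p %| q by rewrite (dvdn_exp (isT : 0 < f.+1) (dvdnn p)).
set t1 := t0 %% q.
have ht1 : q %| t1 ^ 2 + D by rewrite -root_mod.
have t1q : t1 < q by rewrite ltn_pmod.
have t10 : 0 < t1.
  rewrite lt0n; apply/negP => /eqP e; move: ht1; rewrite e add0n.
  by move=> /(dvdn_trans pq); apply/negP.
set t2 := q - t1.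
have qe : q = t1 + t2 by rewrite subnKC // ltnW.
have ht2 : q %| t2 ^ 2 + D.
  have E : t2 ^ 2 + D + t1 * q * 2 = q * q + (t1 ^ 2 + D) by rewrite qe; ring.
  by have := dvdn_add (dvdn_mull q (dvdnn q)) ht1; rewrite -E dvdn_addl // dvdn_mulr // dvdn_mull.
have t2q : t2 < q by rewrite /t2 ltn_subrL t10 q0.
have t12 : t1 != t2.
  apply/negP => /eqP e; move: qe; rewrite -e => qe.
  have : odd q by rewrite /q oddX op orbT.
  by rewrite qe addnn odd_double.
apply/eqP; rewrite eqn_leq; apply/andP; split.
- have -> : 2 = size [:: t1; t2] by [].
  apply: uniq_leq_size; first exact: roots_uniq.
  move=> t; rewrite mem_roots => /andP[tq ht].
  have [->|->] := @two_roots p f.+1 D t t1 pp op pD (isT : 0 < f.+1) tq t1q t10 ht ht1.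
    by rewrite inE eqxx.
  by rewrite !inE eqxx orbT.
- have -> : 2 = size [:: t1; t2] by [].
  apply: uniq_leq_size; first by rewrite /= inE t12.
  by move=> t; rewrite !inE => /orP[] /eqP ->; rewrite mem_roots ?t1q ?t2q.
Qed.


Definition goodp D p := [/\ odd p, ~~ (p %| D) & exists x, p %| x ^ 2 + D].

Lemma roots_sq D n : 0 < n -> (forall p, prime p -> p %| n -> goodp D p) ->
  size (sqroots D (n ^ 2)) = 2 ^ size (primes n).
Proof.
elim: n {-2}n (leqnn n) => [|N IH] n; first by rewrite leqn0 => /eqP->.
move=> nN n0 hp.
case: (ltngtP n 1) => [n1|n1|->]; first by move: n1; rewrite ltnNge n0.
- set p := pdiv n.
  have pp : prime p := pdiv_prime n1.
  have [m cop nE] := pfactor_coprime pp n0.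
  set e := logn p n in nE.
  have e0 : 0 < e by rewrite /e logn_gt0 mem_primes pp n0 pdiv_dvd.
  have m0 : 0 < m by move: n0; rewrite nE muln_gt0 => /andP[].
  have pe1 : 1 < p ^ e by rewrite -(expn0 p) ltn_exp2l // prime_gt1.
  have mn : m < n by rewrite nE mulnC ltn_Pmull.
  have hm : forall q, prime q -> q %| m -> goodp D q.
    by move=> q qp qm; apply: hp => //; rewrite nE dvdn_mulr.
  have [op pD ex] := hp p pp (pdiv_dvd n).
  rewrite nE expnMn -expnM roots_mul ?expn_gt0 ?m0 ?prime_gt0 //; last first.
    by apply: coprimeXl; apply: coprimeXr; rewrite coprime_sym.
  have mN : m <= N by rewrite -ltnS (leq_trans mn nN).
  rewrite (IH m) // (roots_pp D p (e * 2) pp op pD ex); last by rewrite muln_gt0 e0.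
  rewrite -expnSr; congr (2 ^ _).
  have -> : (size (primes m)).+1 = size (p :: primes m) by [].
  apply: perm_size; apply: uniq_perm; rewrite ?primes_uniq //=.
    by rewrite primes_uniq andbT mem_primes pp m0 /= -prime_coprime.
  move=> x; rewrite inE !mem_primes m0 muln_gt0 m0 expn_gt0 (prime_gt0 pp) /=.
  case xp: (prime x); last by case: eqP xp => // ->; rewrite pp.
  by rewrite /= Euclid_dvdM // Euclid_dvdX // e0 andbT (dvdn_prime2 xp pp) orbC.
- by rewrite exp1n /sqroots /= dvd1n.
Qed.


Section Forms.
Local Open Scope ring_scope.

Lemma form_equiv_refl f : form_equiv f f.
Proof.
exists 1, 0, 0, 1; split; first by rewrite mulr1 mulr0 subr0.
case: f => [[a b] c]; rewrite /form_act /feval /fa /fb /fc /=; congr (_, _, _); ring.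
Qed.

Lemma act_id1 f p q r s : fa f * (p * s - q * r) ^+ 2 =
  s ^+ 2 * feval f p r - r * s * (2 * fa f * p * q + fb f * (p * s + q * r) + 2 * fc f * r * s)
  + r ^+ 2 * feval f q s.
Proof. rewrite /feval; ring. Qed.

Lemma act_id2 f p q r s : fb f * (p * s - q * r) ^+ 2 =
  - 2 * s * q * feval f p r + (s * p + r * q) * (2 * fa f * p * q + fb f * (p * s + q * r) + 2 * fc f * r * s)
  - 2 * r * p * feval f q s.
Proof. rewrite /feval; ring. Qed.

Lemma from_elem2 (D c t : nat) : (1 < D)%N -> squarefree D -> classgroup_elem2 D ->
  (1 < c)%N -> odd c -> coprime c D -> (c ^ 2 %| t ^ 2 + D)%N ->
  exists x y : int, [/\ x ^+ 2 + D%:Z * y ^+ 2 = c%:Z * c%:Z,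
     (c%:Z * c%:Z %| t%:Z * y - x)%Z, coprimez x y, x != 0 & y != 0].
Proof.
move=> D1 sqD el c1 oc cD hc.
have ct : coprime c t.
  have g1 : (gcdn c t %| t ^ 2 + D)%N.
    apply: (dvdn_trans (dvdn_gcdl c t)); apply: dvdn_trans hc.
    by rewrite dvdn_exp.
  rewrite (dvdn_addr _ (dvdn_exp (isT : (0 < 2)%N) (dvdn_gcdr c t))) in g1.
  by rewrite /coprime -dvdn1 -(eqP cD) dvdn_gcd dvdn_gcdl g1.
have c2t : coprime c (2 * t) by rewrite coprimeMr coprimen2 oc.
have [k hk] := dvdnP hc.
have hk' : t%:Z ^+ 2 + D%:Z = k%:Z * (c%:Z * c%:Z) by lia.
set e1 := ((t%:Z ^+ 2 + D%:Z) %/ c%:Z)%Z.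
have he1 : e1 * c%:Z = t%:Z ^+ 2 + D%:Z.
  apply: divzK; apply/dvdzP; exists (k%:Z * c%:Z); rewrite hk'; ring.
set g : form := (c%:Z, (2 * t)%N%:Z, e1).
have dg : disc g = - (4 * D%:Z).
  rewrite /disc /fa /fb /fc /=; have -> : 4 * c%:Z * e1 = 4 * (e1 * c%:Z) by ring.
  rewrite he1; lia.
have g1 : gcdz c%:Z (2 * t)%N%:Z = 1 by rewrite /gcdz !absz_nat (eqP c2t).
have pg : prim_pd D g.
  split => //; rewrite /fa /=; first lia.
  by rewrite /fb /= g1 gcd1z.
set B := (2 * t)%N%:Z.
set h : form := (c%:Z * c%:Z, B, ((B ^+ 2 - disc g) %/ (4 * c%:Z * c%:Z))%Z).
have dh : dirichlet g g h.
  exists B; split => //.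
  - rewrite /fb /=; apply/dvdzP; exists B; rewrite /B; ring.
  - rewrite /fa /fb /= gcdzz absz_nat.
    have -> : B + B = 2 * B by ring.
    by rewrite mulKz.
  - split; rewrite /fb /= ?subrr ?dvdz0 //.
    apply/dvdzP; exists k%:Z; rewrite dg /B /g /fa /=; clear -hk'; lia.
have cp : class_prod g g h by exists g, g, h; split => //; apply: form_equiv_refl.
have [p [q [r [s [det E]]]]] := el g h pg cp.
case: E => E1 E2 E3.
have I1 := act_id1 h p q r s; have I2 := act_id2 h p q r s.
rewrite det expr1n !mulr1 -E1 -E2 -E3 /fa /fb /= in I1 I2.
have hcc : s ^+ 2 + D%:Z * r ^+ 2 = c%:Z * c%:Z by rewrite I1; ring.
have ht : t%:Z = - (s * q) - r * p * D%:Z by clear -I2; lia.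
have hdiv : (c%:Z * c%:Z %| t%:Z * r - s)%Z.
  apply/dvdzP; exists (- p); rewrite ht -hcc.
  apply/eqP; rewrite -subr_eq0; apply/eqP.
  transitivity (s * ((p * s - q * r) - 1)); first ring.
  by rewrite det subrr mulr0.
have cop : coprimez s r.
  have : (gcdz s r %| p * s - q * r)%Z.
    by rewrite rpredB // dvdz_mull // ?dvdz_gcdl ?dvdz_gcdr.
  by rewrite det dvdz1 /coprimez /gcdz absz_nat.
exists s, r; split => //.
- apply/negP => /eqP s0; move: det; rewrite s0 mulr0 sub0r => det.
  have : (r %| - (q * r))%Z by rewrite rpredN dvdz_mull.
  rewrite det.
  rewrite dvdz1 => /eqP r1.
  have cD' : (c * c = D)%N.
    move: hcc; rewrite s0 => hcc; clear -hcc r1; lia.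
  have pc := pdiv_prime c1.
  by move: (sqD _ pc); rewrite -cD' (dvdn_mul (pdiv_dvd c) (pdiv_dvd c)).
- apply/negP => /eqP r0; move: det; rewrite r0 mulr0 subr0 => det.
  have : (s %| p * s)%Z by rewrite dvdz_mull.
  rewrite det.
  rewrite dvdz1 => /eqP s1.
  move: hcc; rewrite r0 => hcc; clear -hcc s1 c1; nia.
Qed.

End Forms.


Definition sg (e : bool) (a : nat) : int := (if e then a%:Z else - a%:Z)%R.

Definition tinv (M a b : nat) (e : bool) : nat :=
  ((egcdn b M).1 * a * (if e then 1 else M.-1)) %% M.

Lemma sg2 e a : ((sg e a) ^+ 2 = a%:Z ^+ 2)%R.
Proof. by case: e => //=; rewrite sqrrN. Qed.

Lemma tinv_rel (M a b : nat) (e : bool) : 1 < M -> 0 < b -> coprime b M ->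
  (M%:Z %| ((tinv M a b e)%:Z * b%:Z - sg e a)%R)%Z.
Proof.
case: M => // M M1 b0 co; rewrite /tinv.
case: (egcdnP M.+1 b0) => k1 k2 hk _; rewrite (eqP co) in hk.
have hk' : ((k1)%:Z * b%:Z = k2%:Z * M.+1%:Z + 1)%R by lia.
case: e => /=.
- set X := (k1 * a * 1)%N.
  have hX := divn_eq X M.+1.
  set Q := X %/ M.+1 in hX; set t := X %% M.+1 in hX *.
  have hX' : (t%:Z = k1%:Z * a%:Z - Q%:Z * M.+1%:Z)%R by rewrite /X in hX; lia.
  apply/dvdzP; rewrite hX'.
  exists (a%:Z * k2%:Z - Q%:Z * b%:Z)%R.
  have -> : ((k1%:Z * a%:Z - Q%:Z * M.+1%:Z) * b%:Z - a%:Z =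
     a%:Z * (k1%:Z * b%:Z) - Q%:Z * M.+1%:Z * b%:Z - a%:Z)%R by ring.
  rewrite hk'; ring.
- set X := (k1 * a * M)%N.
  have hX := divn_eq X M.+1.
  set Q := X %/ M.+1 in hX; set t := X %% M.+1 in hX *.
  have hX' : (t%:Z = k1%:Z * a%:Z * M%:Z - Q%:Z * M.+1%:Z)%R by rewrite /X in hX; lia.
  apply/dvdzP; rewrite hX'.
  exists (a%:Z * M%:Z * k2%:Z - Q%:Z * b%:Z + a%:Z)%R.
  have -> : ((k1%:Z * a%:Z * M%:Z - Q%:Z * M.+1%:Z) * b%:Z - - a%:Z =
     a%:Z * M%:Z * (k1%:Z * b%:Z) - Q%:Z * M.+1%:Z * b%:Z + a%:Z)%R by ring.
  rewrite hk' (_ : M.+1%:Z = M%:Z + 1)%R; last by lia.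
  ring.
Qed.

Lemma rel_uniq (M b t u : nat) (x : int) : 0 < M -> coprime b M -> t < M -> u < M ->
  (M%:Z %| (t%:Z * b%:Z - x)%R)%Z -> (M%:Z %| (u%:Z * b%:Z - x)%R)%Z -> t = u.
Proof.
move=> M0 co tM uM h1 h2.
have : (M%:Z %| ((t%:Z - u%:Z) * b%:Z)%R)%Z.
  have -> : ((t%:Z - u%:Z) * b%:Z = (t%:Z * b%:Z - x) - (u%:Z * b%:Z - x))%R by ring.
  by rewrite rpredB.
rewrite Gauss_dvdzl; last by rewrite coprimezE /= coprime_sym.
case/dvdzP => z hz.
have : (z = 0)%R by clear -hz tM uM M0; have [z0|z0|z0] := ltrgtP z 0; nia.
move=> z0; rewrite z0 mul0r in hz; lia.
Qed.

Lemma rel_root (D M a b t : nat) (x : int) : 0 < M -> coprime b M ->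
  (M %| a ^ 2 + D * b ^ 2) -> (x ^+ 2 = a%:Z ^+ 2)%R ->
  (M%:Z %| (t%:Z * b%:Z - x)%R)%Z -> M %| t ^ 2 + D.
Proof.
move=> M0 co hM hx hr.
have hM' : (M%:Z %| (a%:Z ^+ 2 + D%:Z * b%:Z ^+ 2)%R)%Z.
  by move: hM; rewrite dvdn_int (_ : (((a ^ 2 + D * b ^ 2)%N)%:Z = a%:Z ^+ 2 + D%:Z * b%:Z ^+ 2)%R) //; lia.
have : (M%:Z %| ((t%:Z ^+ 2 + D%:Z) * b%:Z ^+ 2)%R)%Z.
  have -> : ((t%:Z ^+ 2 + D%:Z) * b%:Z ^+ 2 =
    (t%:Z * b%:Z - x) * (t%:Z * b%:Z + x) + (a%:Z ^+ 2 + D%:Z * b%:Z ^+ 2) + (x ^+ 2 - a%:Z ^+ 2))%R by ring.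
  by rewrite hx subrr addr0 rpredD // dvdz_mulr.
rewrite Gauss_dvdzl; last by rewrite coprimezE abszX absz_nat coprime_sym; apply: coprimeXl.
rewrite dvdn_int (_ : (((t ^ 2 + D)%N)%:Z = t%:Z ^+ 2 + D%:Z)%R) //; lia.
Qed.

Lemma key_inj (D M x y x' y' : int) : (1 < D)%R -> (0 < M)%R ->
  (x ^+ 2 + D * y ^+ 2 = M)%R -> (x' ^+ 2 + D * y' ^+ 2 = M)%R ->
  (M %| (x * y' - x' * y)%R)%Z -> (x * y' = x' * y)%R.
Proof.
move=> D1 M0 h1 h2 /dvdzP[z hz].
have E : ((x * x' + D * y * y') ^+ 2 + D * (z * M) ^+ 2 = M * M)%R.
  by rewrite -hz -{1}h1 -h2; ring.
have : (z = 0)%R.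
  apply/eqP; apply/negP => /eqP zn0.
  have h3 : (1 <= z * z)%R by clear -zn0; have [z0|z0|z0] := ltrgtP z 0; nia.
  have hMM : (0 < M * M)%R by rewrite mulr_gt0.
  have h5 : (M * M <= (z * z) * (M * M))%R by clear -h3 hMM; nia.
  have E' : ((x * x' + D * y * y') ^+ 2 + D * ((z * z) * (M * M)) = M * M)%R by rewrite -[RHS]E; ring.
  have h6 : (0 <= (x * x' + D * y * y') ^+ 2)%R by rewrite sqr_ge0.
  move: E' h5 h6; set W := ((z * z) * (M * M))%R; set P := ((x * x' + D * y * y') ^+ 2)%R.
  move=> E' h5 h6; clear -E' h5 h6 D1 hMM; nia.
by move=> z0; apply/eqP; rewrite -subr_eq0 hz z0 mul0r.
Qed.

Set Implicit Arguments. Unset Strict Implicit.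


Section Norm.
Variables (D a b c : nat).
Hypothesis hn : normalized D a b c.

Lemma norm_dvd_a p : prime p -> p %| c -> p %| b -> p %| a.
Proof.
case: hn => a0 b0 c0 E g1 pp pc pb.
have : p %| a ^ 2 + D * b ^ 2 by rewrite E dvdn_exp.
rewrite dvdn_addl; last by rewrite dvdn_mull // dvdn_exp.
by rewrite Euclid_dvdX // andbT.
Qed.

Lemma norm_p p : prime p -> p %| c -> ~~ (p %| b).
Proof.
move=> pp pc; apply/negP => pb.
have pa := norm_dvd_a pp pc pb.
case: hn => _ _ _ _ g1.
have : p %| gcdn (gcdn a b) c by rewrite !dvdn_gcd pa pb pc.
by rewrite g1 dvdn1 => /eqP p1; rewrite p1 in pp.
Qed.

Lemma norm_cop_bc : coprime b c.
Proof.
case: hn => a0 b0 c0 E _.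
rewrite /coprime; case: (ltngtP (gcdn b c) 1) => [g0|g1|//].
  by move: g0; rewrite ltnNge gcdn_gt0 c0 orbT.
have pp := pdiv_prime g1.
have pb := dvdn_trans (pdiv_dvd _) (dvdn_gcdl b c).
have pc := dvdn_trans (pdiv_dvd _) (dvdn_gcdr b c).
by move: (norm_p pp pc); rewrite pb.
Qed.

Lemma norm_cop_ab : coprime a b.
Proof.
case: hn => a0 b0 c0 E _.
rewrite /coprime; case: (ltngtP (gcdn a b) 1) => [g0|g1|//].
  by move: g0; rewrite ltnNge gcdn_gt0 b0 orbT.
have pp := pdiv_prime g1.
have pa := dvdn_trans (pdiv_dvd _) (dvdn_gcdl a b).
have pb := dvdn_trans (pdiv_dvd _) (dvdn_gcdr a b).
have pc : pdiv (gcdn a b) %| c.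
  have : pdiv (gcdn a b) %| c ^ 2.
    by rewrite -E dvdn_add // ?dvdn_mull // dvdn_exp.
  by rewrite Euclid_dvdX // andbT.
by move: (norm_p pp pc); rewrite pb.
Qed.

Lemma norm_notD p : squarefree D -> prime p -> p %| c -> ~~ (p %| D).
Proof.
move=> sq pp pc; apply/negP => pD.
case: hn => a0 b0 c0 E _.
have pa : p %| a.
  have : p %| a ^ 2 + D * b ^ 2 by rewrite E dvdn_exp.
  rewrite dvdn_addl; last by rewrite dvdn_mulr.
  by rewrite Euclid_dvdX // andbT.
have : p ^ 2 %| a ^ 2 + D * b ^ 2 by rewrite E dvdn_exp2r.
rewrite dvdn_addr; last by rewrite dvdn_exp2r.
rewrite Gauss_dvdl; last by rewrite coprimeXl // coprimeXr // prime_coprime // norm_p.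
by rewrite -mulnn; apply/negP; apply: sq.
Qed.

Lemma norm_root p : prime p -> p %| c -> exists x, p %| x ^ 2 + D.
Proof.
move=> pp pc; case: hn => a0 b0 c0 E _.
have cop : coprime b p by rewrite coprime_sym prime_coprime // norm_p.
exists (tinv p a b true).
apply: (@rel_root D p a b (tinv p a b true) (sg true a) (prime_gt0 pp) cop _ (sg2 true a)
   (tinv_rel p a b true (prime_gt1 pp) b0 cop)).
by rewrite E dvdn_exp.
Qed.

Lemma norm_odd p : (D %% 4 = 1 \/ D %% 4 = 2) -> prime p -> p %| c -> odd p.
Proof.
move=> D4 pp pc; case: (even_prime pp) => // p2.
have nb := norm_p pp pc; rewrite p2 dvdn2 negbK in nb.
rewrite p2 in pc; case/dvdnP: pc => z hz.
case: hn => a0 b0 c0 E _.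
have hb := odd_double_half b; rewrite nb in hb.
have ha := divn_eq a 2. have hD := divn_eq D 4.
have ra : a %% 2 < 2 by rewrite ltn_pmod.
move: E; rewrite -hb hz ha hD -!muln2.
case: D4 => ->; move: (a %/ 2) (a %% 2) ra (b./2) (D %/ 4) => x r ra y d;
  case: r ra => [|[|]] //= _; lia.
Qed.

End Norm.


Definition sols D c : seq (nat * nat) :=
  [seq x <- [seq (a, b) | a <- iota 1 c, b <- iota 1 c] |
     (x.1 ^ 2 + D * x.2 ^ 2 == c ^ 2) && (gcdn (gcdn x.1 x.2) c == 1)].

Lemma sols_uniq D c : uniq (sols D c).
Proof.
rewrite filter_uniq //; apply: allpairs_uniq; rewrite ?iota_uniq //.
by move=> [? ?] [? ?] _ _ [-> ->].
Qed.

Lemma mem_sols D c a b : 0 < D -> 0 < c -> (a, b) \in sols D c <-> normalized D a b c.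
Proof.
move=> D0 c0; rewrite mem_filter /=; split.
- case/andP => /andP[/eqP E /eqP g] /allpairsP[[a' b'] /= [ha hb [ea eb]]].
  move: ha hb; rewrite !mem_iota -ea -eb => /andP[ha _] /andP[hb _].
  by split.
- case=> a0 b0 _ E g; rewrite E g !eqxx /=; apply/allpairsP; exists (a, b) => /=.
  rewrite !mem_iota a0 b0 /= !add1n !ltnS; split => //.
  + by rewrite -(leq_exp2r _ _ (isT : 0 < 2)) -E leq_addr.
  + rewrite -(leq_exp2r _ _ (isT : 0 < 2)) -E; apply: leq_trans (leq_addl _ _).
    by rewrite leq_pmull.
Qed.

Lemma eq_cop_pairs a b a' b' : 0 < a -> 0 < a' -> coprime a b -> coprime a' b' ->
  a * b' = a' * b -> a = a' /\ b = b'.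
Proof.
move=> a0 a'0 c1 c2 E.
have h1 : a %| a' by rewrite -(Gauss_dvdl _ c1) -E dvdn_mulr.
have h2 : a' %| a by rewrite -(Gauss_dvdl _ c2) E dvdn_mulr.
have aa : a = a' by apply/eqP; rewrite eqn_dvd h1 h2.
split => //; rewrite -aa in E; apply/eqP; rewrite -(eqn_pmul2l a0) mulnC E mulnC //.
Qed.

Lemma absz_sg (x : int) : x != 0%R -> ((`|x|)%:Z = if (0 < x)%R then x else - x)%R.
Proof. by move=> xn; case: ifP => h; lia. Qed.

Lemma count_sols D c : 1 < D -> squarefree D -> classgroup_elem2 D -> 1 < c ->
  (forall p, prime p -> p %| c -> goodp D p) ->
  size (sols D c) * 2 = 2 ^ size (primes c).
Proof.
move=> D1 sq el c1 hg.
have c0 : 0 < c by apply: ltnW.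
have D0 : 0 < D by apply: ltnW.
set m := c ^ 2.
have m1 : 1 < m by rewrite /m -(exp1n 2) ltn_exp2r.
have m0 : 0 < m by apply: ltnW.
have oc : odd c.
  case: (boolP (odd c)) => //; rewrite -dvdn2 => h2.
  by case: (hg 2 (isT : prime 2) h2).
have cD : coprime c D.
  rewrite /coprime; case: (ltngtP (gcdn c D) 1) => [g0|g1|//].
    by move: g0; rewrite ltnNge gcdn_gt0 c0.
  have pp := pdiv_prime g1.
  have pc := dvdn_trans (pdiv_dvd _) (dvdn_gcdl c D).
  have pD := dvdn_trans (pdiv_dvd _) (dvdn_gcdr c D).
  by case: (hg _ pp pc); rewrite pD.
rewrite -(roots_sq D c c0 hg).
set L := [seq (x, e) | x <- sols D c, e <- [:: true; false]].
have -> : size (sols D c) * 2 = size L by rewrite size_allpairs.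
set psi := fun y : (nat * nat) * bool => tinv m y.1.1 y.1.2 y.2.
have hL : forall y, y \in L -> normalized D y.1.1 y.1.2 c.
  by move=> y /allpairsP[[[a b] e'] /= [hx _ ->]] /=; apply/mem_sols.
have cbm : forall y, y \in L -> coprime y.1.2 m.
  by move=> y /hL hn; rewrite coprimeXr // (norm_cop_bc hn).
have hrel : forall y, y \in L ->
    (m%:Z %| ((psi y)%:Z * (y.1.2)%:Z - sg y.2 y.1.1)%R)%Z.
  move=> y hy; apply: tinv_rel => //; last exact: cbm.
  by case: (hL _ hy).
have Em : forall y, y \in L -> ((sg y.2 y.1.1) ^+ 2 + D%:Z * (y.1.2)%:Z ^+ 2 = m%:Z)%R.
  move=> y /hL [_ _ _ E _]; rewrite sg2 /m -E; lia.
rewrite -(size_map psi); apply: perm_size; apply: uniq_perm.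
- rewrite map_inj_in_uniq; last first.
    move=> y y' hy hy' eq.
    have r1 := hrel _ hy; have r2 := hrel _ hy'; rewrite eq in r1.
    have hd : (m%:Z %| (sg y.2 y.1.1 * (y'.1.2)%:Z - sg y'.2 y'.1.1 * (y.1.2)%:Z)%R)%Z.
      have -> : (sg y.2 y.1.1 * (y'.1.2)%:Z - sg y'.2 y'.1.1 * (y.1.2)%:Z =
        ((psi y')%:Z * (y'.1.2)%:Z - sg y'.2 y'.1.1) * (y.1.2)%:Z -
        ((psi y')%:Z * (y.1.2)%:Z - sg y.2 y.1.1) * (y'.1.2)%:Z)%R by ring.
      by apply: rpredB; apply: dvdz_mulr.
    have D1' : (1 < D%:Z)%R by lia.
    have m0' : (0 < m%:Z)%R by lia.
    have K := @key_inj _ _ _ _ _ _ D1' m0' (Em _ hy) (Em _ hy') hd.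
    have [a0 b0 _ _ _] := hL _ hy; have [a0' b0' _ _ _] := hL _ hy'.
    have ca := norm_cop_ab (hL _ hy); have ca' := norm_cop_ab (hL _ hy').
    move: y y' {hy hy' r1 r2 eq hd} K a0 b0 a0' b0' ca ca' => [[a b] e] [[a' b'] e'] /= K a0 b0 a0' b0' ca ca'.
    case: e e' K => [] [] /= K.
    + have E : a * b' = a' * b by clear -K; lia.
      by have [-> ->] := eq_cop_pairs a0 a0' ca ca' E.
    + exfalso; clear -K a0 b0 a0' b0'; nia.
    + exfalso; clear -K a0 b0 a0' b0'; nia.
    + have E : a * b' = a' * b by clear -K; lia.
      by have [-> ->] := eq_cop_pairs a0 a0' ca ca' E.
  apply: allpairs_uniq; rewrite ?sols_uniq //.
  by move=> [? ?] [? ?] _ _ [-> ->].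
- exact: roots_uniq.
move=> t; apply/mapP/idP.
- move=> [y hy ->]; rewrite mem_roots ltn_pmod //=.
  apply: (@rel_root D m y.1.1 y.1.2 (psi y) (sg y.2 y.1.1) m0 (cbm _ hy) _ (sg2 _ _) (hrel _ hy)).
  by case: (hL _ hy) => _ _ _ E _; rewrite E.
- rewrite mem_roots => /andP[tm ht].
  have [x [y [hxy hdiv cop xn0 yn0]]] := from_elem2 D c t D1 sq el c1 oc cD ht.
  set a := `|x|; set b := `|y|; set e := ((0 < x)%R == (0 < y)%R).
  have hn : normalized D a b c.
    split => //; rewrite ?absz_gt0 //.
    + rewrite /a /b; clear -hxy; lia.
    + by move: cop; rewrite coprimezE => /eqP ->; rewrite gcd1n.
  have hy : ((a, b), e) \in L.
    apply/allpairsP; exists ((a, b), e); split => //=; first by apply/mem_sols.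
    by case: e.
  exists ((a, b), e) => //.
  apply: (@rel_uniq m b t (psi ((a, b), e)) (sg e a) m0 (cbm _ hy) tm _ _ (hrel _ hy)).
    by rewrite ltn_pmod.
  have E : (t%:Z * b%:Z - sg e a = t%:Z * y - x \/ t%:Z * b%:Z - sg e a = - (t%:Z * y - x))%R.
    rewrite /sg /e /a /b (absz_sg xn0) (absz_sg yn0).
    case: (0 < x)%R; case: (0 < y)%R => /=; [left|right|left|right]; ring.
  have hm : (m%:Z = c%:Z * c%:Z)%R by rewrite /m; lia.
  by case: E => ->; rewrite ?rpredN hm.
Qed.

Unset Implicit Arguments. Set Strict Implicit.
Local Open Scope ring_scope.


Theorem theorem4p1 (D c : nat) :
  (1 < D)%N -> squarefree D ->
  ((- D%:Z) %% 4)%Z = 2 \/ ((- D%:Z) %% 4)%Z = 3 ->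
  classgroup_elem2 D ->
  (1 < c)%N ->
  ((exists a b : nat, normalized D a b c) <->
     (forall p : nat, prime p -> (p %| c)%N -> inS D p)) /\
  ((forall p : nat, prime p -> (p %| c)%N -> inS D p) ->
     exists s : seq (nat * nat),
       [/\ uniq s,
           (forall a b : nat, (a, b) \in s <-> normalized D a b c) &
           size s = (2 ^ (size (primes c)).-1)%N]).
Proof.
move=> D1 sq hmod el c1.
have D4 : (D %% 4 = 1 \/ D %% 4 = 2)%N by case: hmod => h; [right|left]; lia.
have nec : forall a b, normalized D a b c -> forall p, prime p -> (p %| c)%N -> inS D p.
  move=> a b hn p pp pc; split => //; first exact: (norm_odd hn D4 pp pc).
  have nD := norm_notD hn sq pp pc.
  have [x hx] := norm_root hn pp pc.
  rewrite /legendre; case: ifP => [|_].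
    by rewrite rpredN -dvdn_int (negbTE nD).
  case: ifP => // /existsP hne; exfalso; apply: hne.
  exists (Ordinal (ltn_pmod x (prime_gt0 pp))) => /=.
  rewrite opprK (_ : (x %% p)%:Z ^+ 2 + D%:Z = ((x %% p) ^ 2 + D)%N%:Z); last by lia.
  by rewrite -dvdn_int -root_mod.
have good : (forall p, prime p -> (p %| c)%N -> inS D p) ->
    forall p, prime p -> (p %| c)%N -> goodp D p.
  move=> h p pp pc; case: (h p pp pc) => _ op; rewrite /legendre.
  case: ifP => // hD; case: ifP => // /existsP [x hx] _.
  split => //; first by move: hD; rewrite rpredN -dvdn_int => ->.
  exists x; move: hx; rewrite opprK (_ : x%:Z ^+ 2 + D%:Z = (x ^ 2 + D)%N%:Z); last by lia.
  by rewrite -dvdn_int.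
have count : (forall p, prime p -> (p %| c)%N -> inS D p) ->
     exists s : seq (nat * nat),
       [/\ uniq s,
           (forall a b : nat, (a, b) \in s <-> normalized D a b c) &
           size s = (2 ^ (size (primes c)).-1)%N].
  move=> h; exists (sols D c); split.
  - exact: sols_uniq.
  - by move=> a b; apply: mem_sols; apply: ltnW.
  - have := count_sols D1 sq el c1 (good h).
    have : (0 < size (primes c))%N.
      case: (primes c) (pdiv_prime c1) (pdiv_dvd c) (mem_primes (pdiv c) c) => //.
      by move=> pp pd; rewrite pp (ltnW c1) pd.
    case: (size (primes c)) => // k _ /=.
    by rewrite expnSr => /eqP; rewrite eqn_pmul2r // => /eqP.
split; last exact: count.
split; first by move=> [a [b hn]]; apply: nec hn.
move=> h; have [s [_ hs sz]] := count h.
case: s hs sz => [|[a b] s] hs sz.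
  by move: (expn_gt0 2 (size (primes c)).-1); rewrite -sz.
by exists a, b; apply/hs; rewrite inE eqxx.
Qed.
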